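(* For all $n,r\in\mathbb{N}$, the statistics $\operatorname{veh}$ and $\operatorname{des}$ have the same distribution over $\mathfrak{S}_n^r$, i.e. $\sum_{\pi\in\mathfrak{S}_n^r}t^{\operatorname{veh}(\pi)}=\sum_{\pi\in\mathfrak{S}_n^r}t^{\operatorname{des}(\pi)}$.
   Context: The stack-sorting operator $S$ on words with distinct positive integer letters: $S$ of the empty word is empty; if $w=LmR$ with $m$ the greatest letter, $S(w)=S(L)S(R)m$. $\mathfrak{S}_n^r=\{\pi\in\mathfrak{S}_n:S^r(\pi)=12\cdots n\}$. For $\pi=a_1\cdots a_n$, $\operatorname{des}(\pi)=|\{i\in[n-1]:a_i>a_{i+1}\}|$. The unordered decreasing tree $T(w;\infty)$ ($\infty$ larger than all letters): a single vertex $\infty$ if $w$ is empty; otherwise $w=m_1w_1\cdots m_kw_k$ with $m_i$ the left-to-right maxima, and $T(w;\infty)$ has root $\infty$ with subtrees $T(w_i;m_i)$ (same construction with root labeled $m_i$). $\operatorname{veh}(\pi)$ is the number of non-root vertices of even height (root at height $0$) in $T(\pi;\infty)$. *)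

(* Defs.v *)
From mathcomp Require Import all_boot all_order all_algebra all_fingroup.
Set Implicit Arguments. Unset Strict Implicit. Unset Printing Implicit Defensive.

(* Words are sequences of positive naturals with distinct letters. *)

(* Stack-sorting S (fuel-based; fuel = size w suffices since every recursive
   call is on a strictly shorter word).
   S(empty) = empty; S(L m R) = S(L) S(R) m, m = greatest letter. *)
Fixpoint ssort_aux (fuel : nat) (w : seq nat) : seq nat :=
  match fuel with
  | 0 => [::]
  | f.+1 =>
    match w with
    | [::] => [::]
    | _ :: _ =>
      let m := \max_(x <- w) x in
      let i := index m w in
      ssort_aux f (take i w) ++ ssort_aux f (drop i.+1 w) ++ [:: m]
    end
  end.
Definition ssort (w : seq nat) : seq nat := ssort_aux (size w) w.

Definition pword n (p : 'S_n) : seq nat := [seq (p i).+1 : nat | i <- enum 'I_n].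

(* pi is in S_n^r iff S^r(pi) = 12...n *)
Definition sorted_in (r : nat) (w : seq nat) : bool :=
  iter r ssort w == iota 1 (size w).

Definition des (w : seq nat) : nat :=
  \sum_(i < (size w).-1) (nth 0 w i > nth 0 w i.+1).

(* Rooted plane trees with labels; None stands for the label oo. *)
Inductive dtree := DNode of option nat & seq dtree.

(* forest of subtrees of T(w; .): w = m_1 w_1 ... m_k w_k with m_i the
   left-to-right maxima; subtrees T(w_i; m_i). *)
Fixpoint lr_forest (fuel : nat) (w : seq nat) : seq dtree :=
  match fuel with
  | 0 => [::]
  | f.+1 =>
    match w with
    | [::] => [::]
    | m :: rest =>
      let k := find (fun x => m < x) rest in
      DNode (Some m) (lr_forest f (take k rest)) :: lr_forest f (drop k rest)
    end
  end.

Definition dec_tree (w : seq nat) : dtree := DNode None (lr_forest (size w) w).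

Fixpoint count_even_nonroot (t : dtree) (h : nat) : nat :=
  let: DNode _ ts := t in
  ((0 < h) && ~~ odd h) + sumn (map (fun t' => count_even_nonroot t' h.+1) ts).

Definition veh (w : seq nat) : nat := count_even_nonroot (dec_tree w) 0.

(* Main.v *)
Require Import Defs.
From mathcomp Require Import all_boot all_order all_algebra all_fingroup.
From mathcomp Require Import zify.
Set Implicit Arguments. Unset Strict Implicit. Unset Printing Implicit Defensive.


Lemma bigmax_le (s : seq nat) m : all (fun x => x <= m) s -> \max_(x <- s) x <= m.
Proof.
elim: s => [|a s IH]; first by rewrite big_nil.
by rewrite big_cons /= => /andP[Ha Hs]; rewrite geq_max Ha IH.
Qed.

Lemma bigmax_ge (s : seq nat) x : x \in s -> x <= \max_(y <- s) y.
Proof.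
elim: s => [|a s IH] //=; rewrite in_cons big_cons => /orP[/eqP->|Hx].
  by rewrite leq_maxl.
by rewrite (leq_trans (IH Hx)) // leq_maxr.
Qed.

Lemma bigmax_mem (s : seq nat) : s != [::] -> \max_(x <- s) x \in s.
Proof.
elim: s => [|a s IH] // _; rewrite big_cons in_cons.
have [->|Hs] := eqVneq s [::]; first by rewrite big_nil maxn0 eqxx.
case: (leqP a (\max_(x <- s) x)) => H.
  by rewrite (IH Hs) orbT.
by rewrite eqxx.
Qed.

Lemma max_split X m Y : all (fun x => x < m) X -> all (fun x => x < m) Y ->
  \max_(x <- X ++ m :: Y) x = m.
Proof.
move=> HX HY; apply/eqP; rewrite eqn_leq bigmax_ge ?mem_cat ?mem_head ?orbT // andbT.
apply: bigmax_le; rewrite all_cat /= leqnn /=.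
by apply/andP; split; apply: sub_all (HX) + apply: sub_all (HY); move=> x /ltnW.
Qed.

Definition lt_all (m : nat) (s : seq nat) := all (fun x => x < m) s.

Lemma lt_all_notin m s : lt_all m s -> m \notin s.
Proof. by move=> /allP H; apply/negP => /H; rewrite ltnn. Qed.

Lemma split_index (X Y : seq nat) m : lt_all m X -> index m (X ++ m :: Y) = size X.
Proof. by move=> H; rewrite index_cat (negbTE (lt_all_notin H)) /= eqxx addn0. Qed.

Lemma split_take (X Y : seq nat) (m : nat) : take (size X) (X ++ m :: Y) = X.
Proof. by rewrite take_size_cat. Qed.

Lemma split_drop (X Y : seq nat) (m : nat) : drop (size X).+1 (X ++ m :: Y) = Y.
Proof. by rewrite -cat_rcons drop_size_cat // size_rcons. Qed.

Lemma split_sizes (w : seq nat) : w != [::] ->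
  size (take (index (\max_(x <- w) x) w) w) < size w /\
  size (drop (index (\max_(x <- w) x) w).+1 w) < size w.
Proof.
move=> Hne; have Hi : index (\max_(x <- w) x) w < size w by rewrite index_mem bigmax_mem.
rewrite size_take Hi size_drop; split=> //.
by case: (size w) Hi => // k _; rewrite subSS ltnS leq_subr.
Qed.

Lemma uniq_split_ind (P : seq nat -> Prop) : P [::] ->
  (forall X m Y, lt_all m X -> lt_all m Y -> uniq X -> uniq Y -> P X -> P Y ->
     P (X ++ m :: Y)) -> forall w, uniq w -> P w.
Proof.
move=> P0 Hs w; elim: {w}(size w).+1 {-2}w (ltnSn (size w)) => // n IH w Hw Uw.
have [->|Hne] := eqVneq w [::]; first exact: P0.
move: (bigmax_mem Hne) (@bigmax_ge w); move: (\max_(x <- w) x) => m Hm Hle.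
case/splitPr: Hm Hle Uw Hw => p1 p2 Hle Uw Hw.
have U1 : uniq p1 by move: Uw; rewrite cat_uniq => /and3P[].
have U2 : uniq p2 by move: Uw; rewrite cat_uniq => /and3P[_ _ /andP[]].
have := Uw; rewrite uniq_catC /= mem_cat negb_or => /andP[/andP[Hn2 Hn1] _].
have Hlt : forall x, x \in p1 ++ m :: p2 -> x != m -> x < m.
  by move=> x Hx Hxm; rewrite ltn_neqAle Hxm Hle.
have L1 : lt_all m p1.
  apply/allP=> x Hx; apply: Hlt; first by rewrite mem_cat Hx.
  by apply: contraNneq Hn1 => <-.
have L2 : lt_all m p2.
  apply/allP=> x Hx; apply: Hlt; first by rewrite mem_cat in_cons Hx !orbT.
  by apply: contraNneq Hn2 => <-.
rewrite size_cat /= ltnS in Hw.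
apply: Hs => //; apply: IH => //; apply: leq_trans Hw.
  by rewrite addnS ltnS leq_addr.
by rewrite leq_addl.
Qed.

Definition mx (w : seq nat) := \max_(x <- w) x.
Definition lpart (w : seq nat) := take (index (mx w) w) w.
Definition rpart (w : seq nat) := drop (index (mx w) w).+1 w.

Lemma lpart_size w : w != [::] -> size (lpart w) < size w.
Proof. by move=> H; case: (split_sizes H). Qed.
Lemma rpart_size w : w != [::] -> size (rpart w) < size w.
Proof. by move=> H; case: (split_sizes H). Qed.

Lemma split_parts (X Y : seq nat) m : lt_all m X -> lt_all m Y ->
  [/\ mx (X ++ m :: Y) = m, lpart (X ++ m :: Y) = X & rpart (X ++ m :: Y) = Y].
Proof.
move=> HX HY; rewrite /lpart /rpart /mx max_split // split_index //.
by rewrite split_take split_drop.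
Qed.

Lemma ssort_aux_step f w : w != [::] ->
  ssort_aux f.+1 w = ssort_aux f (lpart w) ++ ssort_aux f (rpart w) ++ [:: mx w].
Proof. by case: w. Qed.

Lemma ssort_aux_fuel f g w : size w <= f -> size w <= g -> ssort_aux f w = ssort_aux g w.
Proof.
elim: f g w => [|f IH] [|g] [|a s] // Hf Hg.
have H1 := lpart_size (w := a :: s) isT; have H2 := rpart_size (w := a :: s) isT.
rewrite !ssort_aux_step // (IH g (lpart _)) ?(IH g (rpart _)) //.
all: first [exact: leq_trans H1 Hf | exact: leq_trans H1 Hg | exact: leq_trans H2 Hf | exact: leq_trans H2 Hg].
Qed.

Lemma ssort_split (X Y : seq nat) m : lt_all m X -> lt_all m Y ->
  ssort (X ++ m :: Y) = ssort X ++ ssort Y ++ [:: m].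
Proof.
move=> HX HY; have [E1 E2 E3] := split_parts HX HY.
have Hne : X ++ m :: Y != [::] by case: X {HX E1 E2 E3}.
rewrite /ssort size_cat /= addnS ssort_aux_step // E1 E2 E3.
by rewrite (@ssort_aux_fuel (size X + size Y) (size X) X) ?leq_addr // (@ssort_aux_fuel (size X + size Y) (size Y) Y) ?leq_addl.
Qed.

Definition phi_node (e : bool) (L R : seq nat) (m : nat) (rec : bool -> seq nat -> seq nat) :=
  if (L != [::]) && (R != [::]) then rec e L ++ m :: rec (~~ e) R
  else let e' := if L == [::] then ~~ e else e in
       if e' then m :: rec e' (L ++ R) else rec e' (L ++ R) ++ [:: m].

Fixpoint phi_aux (f : nat) (e : bool) (w : seq nat) : seq nat :=
  match f with
  | 0 => [::]
  | f.+1 => match w with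
            | [::] => [::]
            | _ :: _ => phi_node e (lpart w) (rpart w) (mx w) (phi_aux f)
            end
  end.

Definition psi_node (e : bool) (X Y : seq nat) (m : nat) (rec : bool -> seq nat -> seq nat) :=
  if (X != [::]) && (Y != [::]) then rec e X ++ m :: rec (~~ e) Y
  else if Y == [::] then (if e then m :: rec false X else rec false X ++ [:: m])
  else (if e then rec true Y ++ [:: m] else m :: rec true Y).

Fixpoint psi_aux (f : nat) (e : bool) (w : seq nat) : seq nat :=
  match f with
  | 0 => [::]
  | f.+1 => match w with
            | [::] => [::]
            | _ :: _ => psi_node e (lpart w) (rpart w) (mx w) (psi_aux f)
            end
  end.

Definition phi e w := phi_aux (size w) e w.
Definition psi e w := psi_aux (size w) e w.

Lemma phi_node_ext e L R m r1 r2 : (forall b, r1 b L = r2 b L) -> (forall b, r1 b R = r2 b R) ->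
  phi_node e L R m r1 = phi_node e L R m r2.
Proof.
by rewrite /phi_node; case: L => [|x L]; case: R => [|y R] //= H1 H2; rewrite ?cats0 ?H1 ?H2.
Qed.

Lemma psi_node_ext e L R m r1 r2 : (forall b, r1 b L = r2 b L) -> (forall b, r1 b R = r2 b R) ->
  psi_node e L R m r1 = psi_node e L R m r2.
Proof.
by rewrite /psi_node; case: L => [|x L]; case: R => [|y R] //= H1 H2; rewrite ?cats0 ?H1 ?H2.
Qed.

Lemma phi_aux_fuel f g e w : size w <= f -> size w <= g -> phi_aux f e w = phi_aux g e w.
Proof.
elim: f g e w => [|f IH] [|g] e [|a s] // Hf Hg.
have H1 := lpart_size (w := a :: s) isT; have H2 := rpart_size (w := a :: s) isT.
rewrite [LHS]/= [RHS]/=; apply: phi_node_ext => b; apply: IH.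
all: first [exact: leq_trans H1 Hf | exact: leq_trans H1 Hg | exact: leq_trans H2 Hf | exact: leq_trans H2 Hg].
Qed.

Lemma psi_aux_fuel f g e w : size w <= f -> size w <= g -> psi_aux f e w = psi_aux g e w.
Proof.
elim: f g e w => [|f IH] [|g] e [|a s] // Hf Hg.
have H1 := lpart_size (w := a :: s) isT; have H2 := rpart_size (w := a :: s) isT.
rewrite [LHS]/= [RHS]/=; apply: psi_node_ext => b; apply: IH.
all: first [exact: leq_trans H1 Hf | exact: leq_trans H1 Hg | exact: leq_trans H2 Hf | exact: leq_trans H2 Hg].
Qed.

Lemma phi_aux_step f e w : w != [::] ->
  phi_aux f.+1 e w = phi_node e (lpart w) (rpart w) (mx w) (phi_aux f).
Proof. by case: w. Qed.
Lemma psi_aux_step f e w : w != [::] ->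
  psi_aux f.+1 e w = psi_node e (lpart w) (rpart w) (mx w) (psi_aux f).
Proof. by case: w. Qed.

Lemma phi_nil e : phi e [::] = [::]. Proof. by []. Qed.
Lemma psi_nil e : psi e [::] = [::]. Proof. by []. Qed.

Lemma phi_split e (X Y : seq nat) m : lt_all m X -> lt_all m Y ->
  phi e (X ++ m :: Y) = phi_node e X Y m phi.
Proof.
move=> HX HY; have [E1 E2 E3] := split_parts HX HY.
have Hne : X ++ m :: Y != [::] by case: X {HX E1 E2 E3}.
rewrite /phi size_cat /= addnS.
rewrite (@phi_aux_step (size X + size Y) e (X ++ m :: Y) Hne) E1 E2 E3.
apply: phi_node_ext => b; apply: phi_aux_fuel => //; [exact: leq_addr | exact: leq_addl].
Qed.

Lemma psi_split e (X Y : seq nat) m : lt_all m X -> lt_all m Y ->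
  psi e (X ++ m :: Y) = psi_node e X Y m psi.
Proof.
move=> HX HY; have [E1 E2 E3] := split_parts HX HY.
have Hne : X ++ m :: Y != [::] by case: X {HX E1 E2 E3}.
rewrite /psi size_cat /= addnS.
rewrite (@psi_aux_step (size X + size Y) e (X ++ m :: Y) Hne) E1 E2 E3.
apply: psi_node_ext => b; apply: psi_aux_fuel => //; [exact: leq_addr | exact: leq_addl].
Qed.


Lemma perm_consr (m : nat) s t : perm_eq s t -> perm_eq (m :: s) (t ++ [:: m]).
Proof.
move=> H; have H1 : perm_eq (m :: s) (m :: t) by rewrite perm_cons.
by apply: perm_trans H1 _; rewrite cats1 perm_sym perm_rcons.
Qed.
Lemma perm_rconsr (m : nat) s t : perm_eq s t -> perm_eq (s ++ [:: m]) (t ++ [:: m]).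
Proof. by move=> H; rewrite perm_cat2r. Qed.
Lemma perm_consl (m : nat) s t : perm_eq s t -> perm_eq (s ++ [:: m]) (m :: t).
Proof. by move=> H; rewrite perm_sym perm_consr // perm_sym. Qed.

Lemma phi_perm w e : uniq w -> perm_eq (phi e w) w.
Proof.
move=> Uw; move: w Uw e; apply: uniq_split_ind => [e|X m Y HX HY UX UY IHX IHY e]; first by [].
rewrite phi_split // /phi_node.
case: X HX UX IHX => [|x X] HX UX IHX; case: Y HY UY IHY => [|y Y] HY UY IHY /=.
- by case: e.
- by case: e => /=; [apply: perm_consl | rewrite perm_cons].
- by rewrite cats0; case: e => /=; rewrite -cat_cons; [apply: perm_consr | apply: perm_rconsr].
- by rewrite -cat_cons perm_cat ?perm_cons.
Qed.

Lemma phi_size w e : uniq w -> size (phi e w) = size w.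
Proof. by move=> U; apply: perm_size (phi_perm e U). Qed.

Lemma phi_lt w e m : uniq w -> lt_all m w -> lt_all m (phi e w).
Proof. by move=> U H; rewrite /lt_all (perm_all _ (phi_perm e U)). Qed.

Lemma ssort_cons m Z : lt_all m Z -> ssort (m :: Z) = ssort Z ++ [:: m].
Proof. by move=> H; rewrite -[m :: Z]cat0s ssort_split. Qed.

Lemma ssort_rcons m Z : lt_all m Z -> ssort (Z ++ [:: m]) = ssort Z ++ [:: m].
Proof. by move=> H; rewrite ssort_split //= cats0. Qed.

Lemma phi_ssort w e : uniq w -> ssort (phi e w) = ssort w.
Proof.
move=> Uw; move: w Uw e; apply: uniq_split_ind => [e|X m Y HX HY UX UY IHX IHY e]; first by [].
rewrite phi_split // /phi_node ssort_split //.
case: X HX UX IHX => [|x X] HX UX IHX; case: Y HY UY IHY => [|y Y] HY UY IHY /=.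
- by case: e => /=; rewrite ssort_cons.
- by case: e => /=; [rewrite [LHS]ssort_rcons | rewrite [LHS]ssort_cons]; rewrite ?IHY //; apply: phi_lt.
- by rewrite cats0; case: e => /=; [rewrite [LHS]ssort_cons | rewrite [LHS]ssort_rcons]; rewrite ?IHX //; apply: phi_lt.
- by rewrite [LHS]ssort_split ?IHX ?IHY //; apply: phi_lt.
Qed.


Lemma phi_eq0 w e : uniq w -> (phi e w == [::]) = (w == [::]).
Proof. by move=> U; rewrite -!size_eq0 phi_size. Qed.

Lemma psi_cons e m Z : lt_all m Z -> psi e (m :: Z) = psi_node e [::] Z m psi.
Proof. by move=> H; rewrite -[m :: Z]cat0s psi_split. Qed.

Lemma psi_rcons e m Z : lt_all m Z -> psi e (Z ++ [:: m]) = psi_node e Z [::] m psi.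
Proof. by move=> H; rewrite psi_split. Qed.

Lemma psi_phi w e : uniq w -> psi e (phi e w) = w.
Proof.
move=> Uw; move: w Uw e; apply: uniq_split_ind => [e|X m Y HX HY UX UY IHX IHY e]; first by [].
rewrite phi_split // /phi_node.
case: X HX UX IHX => [|x X] HX UX IHX; case: Y HY UY IHY => [|y Y] HY UY IHY /=.
- by case: e => /=; rewrite ?psi_cons ?psi_rcons.
- case: e => /=; [rewrite psi_rcons | rewrite psi_cons]; rewrite /psi_node ?phi_eq0 //= ?IHY //; exact: phi_lt.
- rewrite cats0; case: e => /=; [rewrite psi_cons | rewrite psi_rcons]; rewrite /psi_node ?phi_eq0 //= ?IHX //; exact: phi_lt.
- rewrite psi_split /psi_node ?phi_eq0 //= ?IHX ?IHY //; exact: phi_lt.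
Qed.


Lemma des_cons a s : des (a :: s) = (if s is b :: _ then b < a else false) + des s.
Proof.
rewrite /des; case: s => [|b s]; first by rewrite !big_ord0.
by rewrite /= big_ord_recl /=.
Qed.

Lemma des_split (X Y : seq nat) m : lt_all m X -> lt_all m Y ->
  des (X ++ m :: Y) = des X + (Y != [::]) + des Y.
Proof.
move=> HX HY; elim: X HX => [|a X IH] /=.
  move=> _; rewrite des_cons /des big_ord0 add0n.
  by case: Y HY => [|b Y] //= /andP[-> _].
move=> /andP[Ham HX]; rewrite des_cons IH // [des (a :: X)]des_cons.
case: X {IH} HX => [|b X] HX /=; last by rewrite !addnA.
by rewrite ltnNge (ltnW Ham) /des big_ord0.
Qed.

Lemma des_consm m Z : lt_all m Z -> des (m :: Z) = (Z != [::]) + des Z.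
Proof. by move=> H; rewrite -[m :: Z]cat0s des_split // /des big_ord0. Qed.

Lemma des_rconsm m Z : lt_all m Z -> des (Z ++ [:: m]) = des Z.
Proof. by move=> H; rewrite des_split // addn0 /des big_ord0 addn0. Qed.

Definition F (w : seq nat) := lr_forest (size w) w.

Lemma find_le (P : pred nat) (s : seq nat) : find P s <= size s.
Proof. exact: find_size. Qed.

Lemma lr_fuel f g w : size w <= f -> size w <= g -> lr_forest f w = lr_forest g w.
Proof.
elim: f g w => [|f IH] [|g] [|a s] // Hf Hg /=.
have Ht : size (take (find (fun x => a < x) s) s) <= size s by rewrite size_take_min geq_minr.
have Hd : size (drop (find (fun x => a < x) s) s) <= size s by rewrite size_drop leq_subr.
rewrite (IH g (take _ _)) ?(IH g (drop _ _)) //.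
all: first [exact: leq_trans Ht Hf | exact: leq_trans Ht Hg | exact: leq_trans Hd Hf | exact: leq_trans Hd Hg].
Qed.

Lemma take_cat_le (T : Type) n (s1 s2 : seq T) : n <= size s1 -> take n (s1 ++ s2) = take n s1.
Proof.
move=> H; rewrite take_cat; case: ltnP => // H2.
have E : n = size s1 by apply/eqP; rewrite eqn_leq H H2.
by rewrite E subnn take0 cats0 take_size.
Qed.

Lemma drop_cat_le (T : Type) n (s1 s2 : seq T) : n <= size s1 -> drop n (s1 ++ s2) = drop n s1 ++ s2.
Proof.
move=> H; rewrite drop_cat; case: ltnP => // H2.
have E : n = size s1 by apply/eqP; rewrite eqn_leq H H2.
by rewrite E subnn drop0 drop_size.
Qed.

Lemma find_none m R : lt_all m R -> find (fun x => m < x) R = size R.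
Proof.
move=> HR; apply/eqP; rewrite eqn_leq find_size /= leqNgt -has_find.
by apply/hasPn => x Hx; rewrite -leqNgt ltnW // (allP HR).
Qed.

Lemma F_fuel f w : size w <= f -> lr_forest f w = F w.
Proof. by move=> H; apply: lr_fuel. Qed.

Lemma lr_split_aux m R : lt_all m R -> forall f L, lt_all m L ->
  size (L ++ m :: R) <= f -> lr_forest f (L ++ m :: R) = F L ++ [:: DNode (Some m) (F R)].
Proof.
move=> HR; elim=> [|f IH] [|a L] HL Hs //.
  rewrite /= find_none // take_size drop_size F_fuel //.
  by case: f {IH} Hs.
move: HL => /= /andP[Ham HL].
have Hk : find (fun x => a < x) (L ++ m :: R) = find (fun x => a < x) L.
  rewrite find_cat /=; case: ifP => // /negbT Hn; rewrite Ham addn0.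
  by apply/esym/eqP; rewrite eqn_leq find_size /= leqNgt -has_find Hn.
set k := find (fun x => a < x) L in Hk *.
have Hkl : k <= size L by apply: find_size.
have Htk : size (take k L) <= size L by rewrite size_take_min geq_minr.
have Hdk : size (drop k L) <= size L by rewrite size_drop leq_subr.
move: Hs; rewrite /= size_cat /= ltnS => Hs.
have HLf : size L <= f by apply: leq_trans Hs; apply: leq_addr.
rewrite /= Hk take_cat_le // drop_cat_le // IH //; last first.
- by rewrite size_cat /=; apply: leq_trans Hs; rewrite leq_add2r.
- by apply/allP => x /mem_drop Hx; rewrite (allP HL).
rewrite (F_fuel (f := f)) ?(leq_trans Htk HLf) //.
by rewrite !F_fuel.
Qed.

Lemma F_split m L R : lt_all m L -> lt_all m R -> F (L ++ m :: R) = F L ++ [:: DNode (Some m) (F R)].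
Proof. by move=> HL HR; apply: lr_split_aux. Qed.

Definition Cn ts h := sumn [seq count_even_nonroot t h | t <- ts].

Lemma veh_C w : veh w = Cn (F w) 1.
Proof. by []. Qed.

Lemma C_split m L R h : lt_all m L -> lt_all m R ->
  Cn (F (L ++ m :: R)) h = Cn (F L) h + ((0 < h) && ~~ odd h) + Cn (F R) h.+1.
Proof. by move=> HL HR; rewrite F_split // /Cn map_cat sumn_cat /= addn0 addnA. Qed.

Lemma des_nil : des [::] = 0. Proof. by rewrite /des big_ord0. Qed.
Lemma des1 a : des [:: a] = 0. Proof. by rewrite /des big_ord0. Qed.

Lemma C_phi w h : uniq w -> 0 < h -> Cn (F w) h = des (phi (~~ odd h) w) + ((w != [::]) && ~~ odd h).
Proof.
move=> Uw; move: w Uw h; apply: uniq_split_ind => [h _|X m Y HX HY UX UY IHX IHY h Hh].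
  by rewrite des_nil.
rewrite C_split // IHX // IHY // phi_split // /phi_node Hh /= negbK.
case: X HX UX {IHX} => [|x X] HX UX; case: Y HY UY {IHY} => [|y Y] HY UY /=.
- by case: (odd h); rewrite /= des1 ?des_nil.
- by case: (odd h) => /=; rewrite ?des_consm ?des_rconsm ?des_nil ?phi_eq0 //=; try (apply: phi_lt => //); lia.
- by rewrite cats0; case: (odd h) => /=; rewrite ?des_consm ?des_rconsm ?des_nil ?phi_eq0 //=; try (apply: phi_lt => //); lia.
- rewrite des_split ?phi_eq0 //; try (apply: phi_lt => //).
  by case: (odd h) => /=; lia.
Qed.


Lemma veh_des w : uniq w -> veh w = des (phi false w).
Proof. by move=> U; rewrite veh_C C_phi //= andbF addn0. Qed.

Lemma phi_iota n : phi false (iota 1 n) = iota 1 n.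
Proof.
elim: n => [|n IH] //; rewrite -[n.+1]addn1 iotaD add1n.
have H : lt_all n.+1 (iota 1 n) by apply/allP => x; rewrite mem_iota; lia.
rewrite phi_split // /phi_node /= andbF.
case: n H IH => [|n] H IH //=.
by rewrite cats0 IH.
Qed.

Lemma sorted_phi r w : uniq w -> sorted_in r (phi false w) = sorted_in r w.
Proof.
move=> U; rewrite /sorted_in phi_size //; case: r => [|r] /=.
  apply/eqP/eqP => [E|E]; last by rewrite {1}E phi_iota.
  have H := psi_phi false U; rewrite E in H.
  have H2 : psi false (iota 1 (size w)) = iota 1 (size w).
    by rewrite -{1}(phi_iota (size w)) psi_phi // iota_uniq.
  by rewrite -{1}H H2.
by rewrite -!iterS !iterSr phi_ssort.
Qed.

Lemma pword_inj n : injective (@pword n).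
Proof.
move=> p q /eq_in_map H; apply/permP => i; apply: val_inj.
have Hi : i \in enum 'I_n by rewrite mem_enum.
by case: (H i Hi).
Qed.

Lemma pword_perm n (p : 'S_n) : perm_eq (pword p) (iota 1 n).
Proof.
have -> : pword p = [seq x.+1 | x <- [seq val x | x <- [seq p i | i <- enum 'I_n]]].
  by rewrite /pword -!map_comp.
have -> : iota 1 n = [seq x.+1 | x <- [seq val x | x <- enum 'I_n]].
  by rewrite val_enum_ord -[1]/(1 + 0) iotaDl; apply: eq_map => x; rewrite add1n.
apply: perm_map; apply: perm_map; apply: uniq_perm.
- by rewrite map_inj_uniq ?enum_uniq //; exact: perm_inj.
- exact: enum_uniq.
- move=> x; rewrite mem_enum -(permKV p x) mem_map ?mem_enum //; exact: perm_inj.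
Qed.

Lemma A_perm n : perm_eq [seq pword p | p <- index_enum {perm 'I_n}] (permutations (iota 1 n)).
Proof.
have U1 : uniq [seq pword p | p <- index_enum {perm 'I_n}].
  by rewrite map_inj_uniq ?index_enum_uniq //; exact: pword_inj.
have Hsub : {subset [seq pword p | p <- index_enum {perm 'I_n}] <= permutations (iota 1 n)}.
  by move=> w /mapP [p _ ->]; rewrite mem_permutations pword_perm.
have Hsize : size (permutations (iota 1 n)) <= size [seq pword p | p <- index_enum {perm 'I_n}].
  rewrite size_permutations ?iota_uniq // size_iota size_map -(filter_predT (index_enum _)).
  by rewrite deprecated_filter_index_enum -cardE card_Sn.
apply: uniq_perm => //; first exact: permutations_uniq.
exact: (uniq_min_size U1 Hsub Hsize).2.
Qed.

Unset Implicit Arguments.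
Local Open Scope ring_scope.

Theorem corollary7p3 (n r : nat) :
  \sum_(p : 'S_n | sorted_in r (pword p)) ('X^(veh (pword p)) : {poly int})
  = \sum_(p : 'S_n | sorted_in r (pword p)) ('X^(des (pword p)) : {poly int}).
Proof.
set A := [seq pword p | p <- index_enum {perm 'I_n}].
have E : forall G : seq nat -> {poly int},
    \sum_(p : 'S_n | sorted_in r (pword p)) G (pword p) = \sum_(w <- A | sorted_in r w) G w.
  by move=> G; rewrite big_map.
rewrite (E (fun w => 'X^(veh w))) (E (fun w => 'X^(des w))).
have HA : forall w, w \in A -> perm_eq w (iota 1 n) by move=> w /mapP [p _ ->]; exact: pword_perm.
have UA : uniq A by rewrite map_inj_uniq ?index_enum_uniq //; exact: pword_inj.
have Uw : forall w, w \in A -> uniq w by move=> w /HA /perm_uniq ->; exact: iota_uniq.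
rewrite big_mkcond [RHS]big_mkcond.
rewrite (eq_big_seq (fun w => if sorted_in r (phi false w) then 'X^(des (phi false w)) else 0)); last first.
  by move=> w Hw /=; rewrite sorted_phi ?veh_des ?Uw.
rewrite -(big_map (phi false) xpredT (fun w => if sorted_in r w then 'X^(des w) else 0)).
apply: perm_big.
have U1 : uniq [seq phi false w | w <- A].
  rewrite map_inj_in_uniq // => x y Hx Hy Exy.
  by rewrite -(psi_phi false (Uw x Hx)) Exy psi_phi ?Uw.
have Hsub : {subset [seq phi false w | w <- A] <= A}.
  move=> x /mapP [w Hw ->]; rewrite (perm_mem (A_perm n)) mem_permutations.
  exact: perm_trans (phi_perm false (Uw w Hw)) (HA w Hw).
have Hsize : (size A <= size [seq phi false w | w <- A])%N by rewrite size_map.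
apply: uniq_perm => //; exact: (uniq_min_size U1 Hsub Hsize).2.
Qed.
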